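(* Let $(\alpha_D)_D$ be a holomorphically contractible family of pseudometrics and $n\ge3$. There exist a domain $D\subset\mathbb{C}^n$ and subdomains $D_1\subset D_2\subset\dots\subset D$ with $\bigcup_{m\ge1}D_m=D$ such that $\widetilde{\mathbb W}\alpha_{D_m}$ does not converge (pointwise) to $\widetilde{\mathbb W}\alpha_D$ and $\mathbb W\alpha_{D_m}$ does not converge (pointwise) to $\mathbb W\alpha_D$ as $m\to\infty$.
   Context: $\Delta$ is the open unit disc in $\mathbb{C}$. A pseudometric on a domain $D\subset\mathbb{C}^n$ is a function $\eta:D\times\mathbb{C}^n\to[0,\infty)$ with $\eta(a;\lambda X)=|\lambda|\eta(a;X)$. A holomorphically contractible family of pseudometrics is an assignment of a pseudometric $\alpha_D$ to every domain $D\subset\mathbb{C}^n$, for all $n\ge1$, such that $\alpha_\Delta(z;X)=|X|/(1-|z|^2)$ and $\alpha_{D_2}(F(z);F'(z)X)\le\alpha_{D_1}(z;X)$ for all domains $D_1\subset\mathbb{C}^{n_1}$, $D_2\subset\mathbb{C}^{n_2}$, holomorphic $F:D_1\to D_2$, $z\in D_1$, $X\in\mathbb{C}^{n_1}$. (Such $\alpha_D$ lie in $\mathcal M(D)$.) $\mathcal M(D)$: pseudometrics $\eta$ on $D$ such that for every $a\in D$ there are $M,r>0$ with $\eta(z;X)\le M\|X\|$ for $z$ in the ball $\mathbb{B}(a,r)\subset D$, $X\in\mathbb{C}^n$. Wu pseudometric: for $\eta\in\mathcal M(D)$ and $a\in D$, let $\widehat\eta(a;X)=\sup p(X)$ over all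 $\mathbb{C}$-seminorms $p\le\eta(a;\cdot)$. Let $V_\eta(a)=\{X:\widehat\eta(a;X)=0\}$, $U_\eta(a)$ its orthogonal complement (standard Hermitian product), $m(\eta,a)=\dim U_\eta(a)$. Let $\mathcal F(\eta,a)$ be the set of positive semidefinite Hermitian forms $s$ on $\mathbb{C}^n$ with $\sqrt{s(X,X)}\le\eta(a;X)$ for all $X$, ordered by $\alpha\prec\beta$ iff $\det[\alpha(e_j,e_k)]\le\det[\beta(e_j,e_k)]$ for a basis $(e_j)$ of $U_\eta(a)$; it has a unique maximal element $s(\eta,a)$. Set $\widetilde{\mathbb W}\eta(a;X)=\sqrt{s(\eta,a)(X,X)}$ and $\mathbb W\eta(a;X)=\sqrt{m(\eta,a)}\,\widetilde{\mathbb W}\eta(a;X)$. *)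

(* Defs.v *)
From HB Require Import structures.
From mathcomp Require Import all_boot all_order all_algebra.
Import Order.TTheory GRing.Theory Num.Theory.
From mathcomp Require Import complex.
From mathcomp Require Import all_classical all_reals topology normedtype sequences.
From Stdlib Require Import ClassicalEpsilon.

Set Implicit Arguments.
Unset Strict Implicit.
Unset Printing Implicit Defensive.

Local Open Scope ring_scope.
Local Open Scope classical_set_scope.

Section Defs.
Variable R : realType.
Local Notation C := (R[i]).

Definition cabs (z : C) : R := Num.sqrt (complex.Re z ^+ 2 + complex.Im z ^+ 2).

Definition vnorm n (X : 'cV[C]_n) : R := Num.sqrt (\sum_(i < n) cabs (X i 0) ^+ 2).

Definition hprod n (X Y : 'cV[C]_n) : C := \sum_(i < n) X i 0 * conjc (Y i 0).

Definition cball n (a : 'cV[C]_n) (r : R) : set 'cV[C]_n :=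
  [set z | vnorm (z - a) < r].

Definition copen n (D : set 'cV[C]_n) : Prop :=
  forall a, D a -> exists2 r : R, 0 < r & cball a r `<=` D.

Definition domain n (D : set 'cV[C]_n) : Prop :=
  [/\ copen D, D !=set0 &
      forall A B : set 'cV[C]_n, copen A -> copen B -> D = A `|` B ->
        A `&` B = set0 -> A = set0 \/ B = set0].

Definition cderiv n1 n2 (F : 'cV[C]_n1 -> 'cV[C]_n2) (z : 'cV[C]_n1)
    (A : 'M[C]_(n2, n1)) : Prop :=
  forall eps : R, 0 < eps -> exists2 del : R, 0 < del &
    forall h : 'cV[C]_n1, vnorm h < del ->
      vnorm (F (z + h) - F z - A *m h) <= eps * vnorm h.

Definition holo_on n1 n2 (D : set 'cV[C]_n1) (F : 'cV[C]_n1 -> 'cV[C]_n2) : Prop :=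
  forall z, D z -> exists A, cderiv F z A.

Definition pseudometric n (D : set 'cV[C]_n) (eta : 'cV[C]_n -> 'cV[C]_n -> R) : Prop :=
  forall a, D a -> forall (X : 'cV[C]_n) (lam : C),
    0 <= eta a X /\ eta a (lam *: X) = cabs lam * eta a X.

Definition unit_disc : set 'cV[C]_1 := [set z | cabs (z 0 0) < 1].

Definition hol_contractible
    (alpha : forall n : nat, set 'cV[C]_n -> 'cV[C]_n -> 'cV[C]_n -> R) : Prop :=
  [/\ (forall n (D : set 'cV[C]_n), (0 < n)%N -> domain D -> pseudometric D (alpha n D)),
      (forall z X, unit_disc z ->
          alpha 1%N unit_disc z X = cabs (X 0 0) / (1 - cabs (z 0 0) ^+ 2)) &
      (forall n1 n2 (D1 : set 'cV[C]_n1) (D2 : set 'cV[C]_n2)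
              (F : 'cV[C]_n1 -> 'cV[C]_n2),
          (0 < n1)%N -> (0 < n2)%N -> domain D1 -> domain D2 ->
          holo_on D1 F -> F @` D1 `<=` D2 ->
          forall z A, D1 z -> cderiv F z A ->
          forall X, alpha n2 D2 (F z) (A *m X) <= alpha n1 D1 z X)].

Section Wu.
Variable n : nat.
Variable eta : 'cV[C]_n -> 'cV[C]_n -> R.

Definition cseminorm (p : 'cV[C]_n -> R) : Prop :=
  [/\ forall X, 0 <= p X,
      forall X Y, p (X + Y) <= p X + p Y &
      forall (lam : C) X, p (lam *: X) = cabs lam * p X].

Definition eta_hat (a X : 'cV[C]_n) : R :=
  sup [set p X | p in [set p | cseminorm p /\ forall Y, p Y <= eta a Y]].

Definition Vset (a : 'cV[C]_n) : set 'cV[C]_n := [set X | eta_hat a X = 0].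

Definition Uset (a : 'cV[C]_n) : set 'cV[C]_n :=
  [set Y | forall X, Vset a X -> hprod X Y = 0].

Definition is_basis (U : set 'cV[C]_n) k (e : 'I_k -> 'cV[C]_n) : Prop :=
  [/\ forall j, U (e j),
      forall Y, U Y -> exists c : 'I_k -> C, Y = \sum_(j < k) c j *: e j &
      forall c : 'I_k -> C, \sum_(j < k) c j *: e j = 0 -> forall j, c j = 0].

Definition mdim (a : 'cV[C]_n) : nat :=
  epsilon (inhabits 0%N) (fun k => exists e : 'I_k -> 'cV[C]_n, is_basis (Uset a) e).

Definition psd_hermitian (s : 'cV[C]_n -> 'cV[C]_n -> C) : Prop :=
  [/\ forall (a b : C) X Y Z, s (a *: X + b *: Y) Z = a * s X Z + b * s Y Z,
      forall X Y, s Y X = conjc (s X Y) &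
      forall X, 0 <= complex.Re (s X X)].

Definition Fset (a : 'cV[C]_n) : set ('cV[C]_n -> 'cV[C]_n -> C) :=
  [set s | psd_hermitian s /\
           forall X, Num.sqrt (complex.Re (s X X)) <= eta a X].

Definition gram_det (s : 'cV[C]_n -> 'cV[C]_n -> C) k (e : 'I_k -> 'cV[C]_n) : C :=
  \det (\matrix_(j < k, l < k) s (e j) (e l)).

Definition wprec (a : 'cV[C]_n) (s t : 'cV[C]_n -> 'cV[C]_n -> C) : Prop :=
  exists k (e : 'I_k -> 'cV[C]_n), is_basis (Uset a) e /\
    complex.Re (gram_det s e) <= complex.Re (gram_det t e).

Definition smax (a : 'cV[C]_n) : 'cV[C]_n -> 'cV[C]_n -> C :=
  epsilon (inhabits (fun _ _ => 0))
    (fun s => Fset a s /\ forall t, Fset a t -> wprec a t s).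

Definition Wt (a X : 'cV[C]_n) : R := Num.sqrt (complex.Re (smax a X X)).

Definition W (a X : 'cV[C]_n) : R := Num.sqrt (mdim a)%:R * Wt a X.

End Wu.
End Defs.

(* Main.v *)
Require Import Defs.
From HB Require Import structures.
From mathcomp Require Import all_boot all_order all_algebra.
Import Order.TTheory GRing.Theory Num.Theory.
From mathcomp Require Import complex.
From mathcomp Require Import all_classical all_reals topology normedtype sequences.
From mathcomp Require Import lra ring.
From Stdlib Require Import ClassicalEpsilon.

Import numFieldNormedType.Exports.
Set Implicit Arguments.
Unset Strict Implicit.
Unset Printing Implicit Defensive.
Local Open Scope ring_scope.
Local Open Scope classical_set_scope.
Local Open Scope complex_scope.
Local Open Scope ring_scope.
Section Work.
Variable R : realType.
Local Notation C := (R[i]).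

Lemma cabsE (z : C) : (cabs z)%:C = `|z|.
Proof. by rewrite normc_def. Qed.

Lemma cabs_ge0 (z : C) : 0 <= cabs z.
Proof. exact: sqrtr_ge0. Qed.

Lemma cabsD (x y : C) : cabs (x + y) <= cabs x + cabs y.
Proof. by rewrite -lecR rmorphD /= !cabsE ler_normD. Qed.

Lemma cabsM (x y : C) : cabs (x * y) = cabs x * cabs y.
Proof. by apply: complexI; rewrite rmorphM /= !cabsE normrM. Qed.

Lemma cabs_real (x : R) : cabs x%:C = `|x|.
Proof. by rewrite /cabs /= expr0n /= addr0 sqrtr_sqr. Qed.

Lemma cabsN (x : C) : cabs (- x) = cabs x.
Proof. by apply: complexI; rewrite !cabsE normrN. Qed.

Lemma cabs0 : cabs (0 : C) = 0.
Proof. by apply: complexI; rewrite !cabsE normr0. Qed.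

Lemma cabs2 (z : C) : cabs z ^+ 2 = complex.Re z ^+ 2 + complex.Im z ^+ 2.
Proof. by rewrite /cabs sqr_sqrtr // addr_ge0 // sqr_ge0. Qed.

Lemma vnorm_ge0 n (X : 'cV[C]_n) : 0 <= vnorm X.
Proof. exact: sqrtr_ge0. Qed.

Lemma vnormZ n (c : C) (X : 'cV[C]_n) : vnorm (c *: X) = cabs c * vnorm X.
Proof.
rewrite /vnorm; under eq_bigr => i _ do rewrite mxE cabsM exprMn.
rewrite -mulr_sumr sqrtrM ?sqr_ge0 // sqrtr_sqr ger0_norm //; exact: cabs_ge0.
Qed.

Lemma vnorm0 n : vnorm (0 : 'cV[C]_n) = 0.
Proof. by rewrite -(scale0r (0 : 'cV[C]_n)) vnormZ cabs0 mul0r. Qed.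

Lemma cabs_le_vnorm n (X : 'cV[C]_n) i : cabs (X i 0) <= vnorm X.
Proof.
rewrite -(ger0_norm (cabs_ge0 (X i 0))) -sqrtr_sqr; apply: ler_wsqrtr.
rewrite (bigD1 i) //= lerDl; apply: sumr_ge0 => j _; exact: sqr_ge0.
Qed.

Definition star n (D : set 'cV[C]_n) :=
  forall z (t : R), D z -> 0 <= t <= 1 -> D (t%:C *: z).

Lemma vnorm_seg n (z : 'cV[C]_n) (s t : R) :
  vnorm (s%:C *: z - t%:C *: z) = `|s - t| * vnorm z.
Proof. by rewrite -scalerBl -rmorphB vnormZ cabs_real. Qed.

Lemma conn_aux n (D A B : set 'cV[C]_n) : copen A -> copen B ->
  D = A `|` B -> A `&` B = set0 -> star D -> A 0 -> B = set0.
Proof.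
move=> oA oB DE AB0 sD A0.
apply/seteqP; split=> // z Bz; exfalso.
have Dz : D z by rewrite DE; right.
have Dt t : 0 <= t <= 1 -> A (t%:C *: z) \/ B (t%:C *: z).
  by move=> ht; have := sD _ _ Dz ht; rewrite DE.
have nAB w : A w -> B w -> False.
  by move=> Aw Bw; have : (A `&` B) w by []; rewrite AB0.
pose T := [set t : R | 0 <= t <= 1 /\ forall s, 0 <= s <= t -> A (s%:C *: z)].
have T0 : T 0.
  split; first by rewrite lexx ler01.
  move=> s /andP[s0 s0']; have -> : s = 0 by apply/eqP; rewrite eq_le s0' s0.
  by rewrite scale0r.
have ubT : ubound T 1 by move=> t [/andP[_ ->]].
have hsT : has_sup T by split; [exists 0 | exists 1].
set tau := sup T.
have tau0 : 0 <= tau by apply: (ub_le_sup hsT.2).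
have tau1 : tau <= 1 by apply: ge_sup => //; exists 0.
have below s : 0 <= s -> s < tau -> A (s%:C *: z).
  move=> s0 stau; have [t [_ Ht] st] := sup_gt (ex_intro _ 0 T0) stau.
  by apply: Ht; rewrite s0 ltW.
have vz0 := vnorm_ge0 z.
case: (Dt tau); first by rewrite tau0 tau1.
- move=> Aw; have [r r0 rA] := oA _ Aw.
  pose d := r / (vnorm z + 1).
  have d0 : 0 < d by rewrite divr_gt0 // ltr_wpDl.
  have dr : d * vnorm z < r.
    have : d * (vnorm z + 1) = r by rewrite /d mulfVK // gt_eqF // ltr_wpDl.
    nra.
  pose t' := Num.min 1 (tau + d / 2).
  have Tt' : T t'.
    split.
      apply/andP; split; last by rewrite /t' ge_min lexx.
      by rewrite /t' le_min ler01 /= addr_ge0 // divr_ge0 // ltW.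
    move=> s /andP[s0 st']; have [stau|taus] := ltP s tau; first exact: below.
    have sd : s <= tau + d / 2 by move: st'; rewrite /t' le_min => /andP[].
    have := rA (s%:C *: z); apply; rewrite /cball /= vnorm_seg ger0_norm;
      last by rewrite subr_ge0.
    have : (s - tau) * vnorm z <= d / 2 * vnorm z.
      by apply: ler_wpM2r => //; rewrite lerBlDl.
    nra.
  have := ub_le_sup hsT.2 Tt'; rewrite /t' ge_min => /orP[H1|H2].
    have tau1' : tau = 1 by apply/eqP; rewrite eq_le tau1 H1.
    by apply: (nAB z) => //; move: Aw; rewrite tau1' scale1r.
  have h2 : 0 < d / 2 by rewrite divr_gt0.
  by move: H2; rewrite -/tau; lra.
- move=> Bw; have [r r0 rB] := oB _ Bw.
  have [tz|tpos] := eqVneq tau 0.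
    by apply: (nAB 0) => //; move: Bw; rewrite tz scale0r.
  have tp : 0 < tau by rewrite lt_def tpos tau0.
  pose d := Num.min tau (r / (vnorm z + 1)).
  have d0 : 0 < d by rewrite lt_min tp divr_gt0 // ltr_wpDl.
  have dr : d * vnorm z < r.
    have : d <= r / (vnorm z + 1) by rewrite /d ge_min lexx orbT.
    have : r / (vnorm z + 1) * (vnorm z + 1) = r by rewrite mulfVK // gt_eqF // ltr_wpDl.
    nra.
  have dt : d <= tau by rewrite /d ge_min lexx.
  pose s := tau - d / 2.
  have As : A (s%:C *: z) by apply: below; rewrite /s; lra.
  apply: (nAB _ As); apply: rB; rewrite /cball /= vnorm_seg /s.
  have -> : tau - d / 2 - tau = - (d / 2) by ring.
  rewrite normrN ger0_norm; last by rewrite divr_ge0 // ltW.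
  nra.
Qed.

Lemma star_domain n (D : set 'cV[C]_n) : copen D -> D 0 -> star D -> domain D.
Proof.
move=> oD D0 sD; split => //; first by exists 0.
move=> A B oA oB DE AB0.
have : (A `|` B) 0 by rewrite -DE.
case=> [A0|B0]; first by right; exact: (conn_aux oA oB DE AB0 sD A0).
left; apply: (conn_aux (D := D) oB oA) => //; first by rewrite setUC.
by rewrite setIC.
Qed.

End Work.
Section Work2.
Variable R : realType.
Local Notation C := (R[i]).

Lemma det22 (A : 'M[C]_2) : \det A = A 0 0 * A 1 1 - A 0 1 * A 1 0.
Proof.
rewrite (expand_det_row _ 0) !big_ord_recl big_ord0 /cofactor !det_mx11 !mxE /=.
rewrite addr0 !expr0 ?expr1 /= mul1r mulN1r mulrN.
by congr (_ * _ - _ * _); congr (A _ _); apply/val_inj.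
Qed.

Lemma lin_cderiv n1 n2 (A : 'M[C]_(n2, n1)) z : cderiv (mulmx A) z A.
Proof.
move=> eps e0; exists 1 => // h _.
rewrite mulmxDr [A *m z + _]addrC addrK subrr vnorm0.
by rewrite mulr_ge0 ?vnorm_ge0 // ltW.
Qed.

Lemma holo_lin n1 n2 (D : set 'cV[C]_n1) (A : 'M[C]_(n2, n1)) : holo_on D (mulmx A).
Proof. by move=> z _; exists A; exact: lin_cderiv. Qed.

Definition lf N (p q : C) (i j : 'I_N) (z : 'cV[C]_N) : C := p * z i 0 + q * z j 0.
Definition Hs N (p q : C) (i j : 'I_N) (b : R) : set 'cV[C]_N :=
  [set z | cabs (lf p q i j z) < b].

Lemma lfD N p q (i j : 'I_N) z1 z2 : lf p q i j (z1 + z2) = lf p q i j z1 + lf p q i j z2.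
Proof. rewrite /lf !mxE; ring. Qed.

Lemma lfZ N p q (i j : 'I_N) (c : C) z : lf p q i j (c *: z) = c * lf p q i j z.
Proof. rewrite /lf !mxE; ring. Qed.

Lemma lf_bound N p q (i j : 'I_N) z : cabs (lf p q i j z) <= (cabs p + cabs q) * vnorm z.
Proof.
rewrite /lf; apply: le_trans (cabsD _ _) _; rewrite !cabsM mulrDl.
by apply: lerD; apply: ler_wpM2l; rewrite ?cabs_ge0 ?cabs_le_vnorm.
Qed.

Lemma copen_Hs N p q (i j : 'I_N) b : copen (Hs p q i j b).
Proof.
move=> a Ha; rewrite /Hs /= in Ha.
set K := cabs p + cabs q + 1.
have K0 : 0 < K by rewrite /K ltr_pwDr // addr_ge0 ?cabs_ge0.
exists ((b - cabs (lf p q i j a)) / K); first by rewrite divr_gt0 // subr_gt0.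
move=> z; rewrite /cball /= => hz.
have -> : z = a + (z - a) by rewrite addrC subrK.
rewrite /Hs /= lfD; apply: le_lt_trans (cabsD _ _) _.
have h1 := lf_bound p q i j (z - a).
have h2 : (cabs p + cabs q) * vnorm (z - a) <= K * vnorm (z - a).
  by apply: ler_wpM2r; rewrite ?vnorm_ge0 // /K lerDl.
have h3 : K * vnorm (z - a) < b - cabs (lf p q i j a).
  by rewrite mulrC -ltr_pdivlMr.
lra.
Qed.

Lemma star_Hs N p q (i j : 'I_N) b : star (Hs p q i j b).
Proof.
move=> z t; rewrite /Hs /= => hz /andP[t0 t1].
rewrite lfZ cabsM cabs_real ger0_norm //.
apply: le_lt_trans hz; rewrite -[leRHS]mul1r; apply: ler_wpM2r => //; exact: cabs_ge0.
Qed.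

Lemma Hs0 N p q (i j : 'I_N) b : 0 < b -> Hs p q i j b 0.
Proof. by move=> b0; rewrite /Hs /lf /= !mxE !mulr0 addr0 cabs0. Qed.

Lemma copenI N (A B : set 'cV[C]_N) : copen A -> copen B -> copen (A `&` B).
Proof.
move=> oA oB a [Aa Ba]; have [r r0 hr] := oA a Aa; have [s s0 hs] := oB a Ba.
exists (Num.min r s); first by rewrite lt_min r0 s0.
move=> z hz; split; [apply: hr | apply: hs]; apply: lt_le_trans hz _;
  by rewrite ge_min lexx ?orbT.
Qed.

Lemma starI N (A B : set 'cV[C]_N) : star A -> star B -> star (A `&` B).
Proof. by move=> sA sB z t [Az Bz] ht; split; [apply: sA | apply: sB]. Qed.

Lemma disc_eq : (@unit_disc R) = Hs 1 0 (0 : 'I_1) 0 1.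
Proof.
by apply/funext => z; apply/propext; rewrite /Hs /lf /(@unit_disc R) /= mul1r mul0r addr0.
Qed.

Lemma domain_disc : domain (@unit_disc R).
Proof.
rewrite disc_eq; apply: star_domain; [exact: copen_Hs | exact: Hs0 | exact: star_Hs].
Qed.

Definition lfmx N (p q : C) (i j : 'I_N) : 'M[C]_(1, N) := p *: 'e_i + q *: 'e_j.

Lemma lfmxE N p q (i j : 'I_N) X : (lfmx p q i j *m X) 0 0 = lf p q i j X.
Proof. by rewrite /lfmx mulmxDl -!scalemxAl -!rowE !mxE. Qed.

Lemma vmulE N (v : 'cV[C]_N) (zeta : 'cV[C]_1) : v *m zeta = zeta 0 0 *: v.
Proof. by rewrite {1}(mx11_scalar zeta) mul_mx_scalar. Qed.

Unset Implicit Arguments.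
Variable alpha : forall n : nat, set 'cV[C]_n -> 'cV[C]_n -> 'cV[C]_n -> R.
Set Implicit Arguments.
Hypothesis Halpha : hol_contractible alpha.

Lemma alpha_disc0 X : alpha 1%N (@unit_disc R) 0 X = cabs (X 0 0).
Proof.
case: Halpha => _ H _; rewrite H; last by rewrite /unit_disc /= mxE cabs0 ltr01.
by rewrite mxE cabs0 expr0n /= subr0 divr1.
Qed.

Lemma alpha_lower N (D : set 'cV[C]_N) p q (i j : 'I_N) X :
  (0 < N)%N -> domain D -> D 0 -> (forall z, D z -> cabs (lf p q i j z) < 1) ->
  cabs (lf p q i j X) <= alpha N D 0 X.
Proof.
move=> N0 dD D0 hD; case: Halpha => _ _ H.
have := H N 1%N D (@unit_disc R) (mulmx (lfmx p q i j)) N0 isT dD domain_disc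
  (@holo_lin _ _ D (lfmx p q i j)) _ 0 _ D0 (@lin_cderiv _ _ _ _) X.
rewrite mulmx0 alpha_disc0 lfmxE; apply.
by move=> _ [x Dx <-]; rewrite /unit_disc /= lfmxE; apply: hD.
Qed.

Lemma alpha_upper N (D : set 'cV[C]_N) (v : 'cV[C]_N) :
  (0 < N)%N -> domain D -> D 0 -> (forall zeta : C, cabs zeta < 1 -> D (zeta *: v)) ->
  alpha N D 0 v <= 1.
Proof.
move=> N0 dD D0 hD; case: Halpha => _ _ H.
have := H 1%N N (@unit_disc R) D (mulmx v) isT N0 domain_disc dD
  (@holo_lin _ _ (@unit_disc R) v) _ 0 _ _ (@lin_cderiv _ _ _ _) 1%:M.
rewrite mulmx0 mulmx1 alpha_disc0 mxE /= cabs_real normr1; apply.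
- by move=> _ [x Dx <-]; rewrite vmulE; apply: hD.
- by rewrite /unit_disc /= mxE cabs0 ltr01.
Qed.

Lemma alpha_hom N (D : set 'cV[C]_N) (lam : C) X :
  (0 < N)%N -> domain D -> D 0 -> alpha N D 0 (lam *: X) = cabs lam * alpha N D 0 X.
Proof. by move=> N0 dD D0; case: Halpha => H _ _; have [_ ->] := H N D N0 dD 0 D0 X lam. Qed.

Lemma alpha_ge0 N (D : set 'cV[C]_N) X :
  (0 < N)%N -> domain D -> D 0 -> 0 <= alpha N D 0 X.
Proof. by move=> N0 dD D0; case: Halpha => H _ _; have [-> _] := H N D N0 dD 0 D0 X 0. Qed.

Lemma alpha_zero N (D : set 'cV[C]_N) X :
  (0 < N)%N -> domain D -> D 0 -> (forall c : C, D (c *: X)) -> alpha N D 0 X = 0.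
Proof.
move=> N0 dD D0 hD.
have a0 := alpha_ge0 X N0 dD D0.
have hk (k : R) : 0 < k -> k * alpha N D 0 X <= 1.
  move=> k0; rewrite -(ger0_norm (ltW k0)) -cabs_real -alpha_hom //.
  by apply: alpha_upper => // z _; rewrite scalerA; apply: hD.
apply/eqP; rewrite eq_le a0 andbT; rewrite leNgt; apply/negP => ap.
have := hk (2 / alpha N D 0 X); rewrite divr_gt0 // => /(_ isT).
rewrite mulfVK ?gt_eqF //; lra.
Qed.

End Work2.
Section Work3.
Variable R : realType.
Local Notation C := (R[i]).

Lemma mulcJ_real (x : C) : x * conjc x = ((complex.Re x)^+2 + (complex.Im x)^+2)%:C.
Proof. by case: x => a b; rewrite /= /conjc /=; congr (_ +i* _); ring. Qed.

Lemma Re_xzx (x z : C) :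
  complex.Re (x * z * conjc x) = ((complex.Re x)^+2 + (complex.Im x)^+2) * complex.Re z.
Proof. by case: x => a b; case: z => c d; rewrite /=; ring. Qed.

Lemma sqr_pos (x : C) : x != 0 -> 0 < (complex.Re x)^+2 + (complex.Im x)^+2.
Proof.
case: x => a b /= hx; rewrite lt_def addr_ge0 ?sqr_ge0 // andbT.
apply/negP => /eqP /eqP; rewrite paddr_eq0 ?sqr_ge0 // !sqrf_eq0 => /andP[/eqP a0 /eqP b0].
by move: hx; rewrite a0 b0 eqxx.
Qed.

Section Sesq.
Variable N : nat.
Variable s : 'cV[C]_N -> 'cV[C]_N -> C.
Hypothesis Hs : psd_hermitian s.

Lemma s0l Z : s 0 Z = 0.
Proof. by case: Hs => lin _ _; have := lin 0 0 0 0 Z; rewrite !scale0r addr0 !mul0r addr0. Qed.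

Lemma sDl X Y Z : s (X + Y) Z = s X Z + s Y Z.
Proof. by case: Hs => lin _ _; have := lin 1 1 X Y Z; rewrite !scale1r !mul1r. Qed.

Lemma sZl c X Z : s (c *: X) Z = c * s X Z.
Proof.
case: Hs => lin _ _; have := lin c 0 X 0 Z.
by rewrite scale0r addr0 s0l mulr0 addr0.
Qed.

Lemma sherm X Y : s Y X = conjc (s X Y).
Proof. by case: Hs => _ h _. Qed.

Lemma sDr X Y Z : s Z (X + Y) = s Z X + s Z Y.
Proof. by rewrite (sherm (X + Y)) sDl rmorphD /= -!sherm. Qed.

Lemma sZr c X Z : s Z (c *: X) = conjc c * s Z X.
Proof. by rewrite (sherm (c *: X)) sZl rmorphM /= -sherm. Qed.

Lemma s0r Z : s Z 0 = 0.
Proof. by rewrite sherm s0l rmorph0. Qed.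

Lemma s_suml I (r : seq I) (P : pred I) (F : I -> 'cV[C]_N) Z :
  s (\sum_(i <- r | P i) F i) Z = \sum_(i <- r | P i) s (F i) Z.
Proof. exact: (big_morph (fun X => s X Z) (fun X Y => sDl X Y Z) (s0l Z)). Qed.

Lemma s_sumr I (r : seq I) (P : pred I) (F : I -> 'cV[C]_N) Z :
  s Z (\sum_(i <- r | P i) F i) = \sum_(i <- r | P i) s Z (F i).
Proof. exact: (big_morph (fun X => s Z X) (fun X Y => sDr X Y Z) (s0r Z)). Qed.

Lemma sXX_real X : complex.Im (s X X) = 0.
Proof.
have := sherm X X; case: (s X X) => a b /= [] /eqP.
by rewrite -subr_eq0 opprK -mulr2n mulrn_eq0 /= => /eqP.
Qed.

Lemma sXX_ge0 X : 0 <= complex.Re (s X X).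
Proof. by case: Hs. Qed.

End Sesq.

Section WuGen.
Variable N p : nat.
Hypothesis hp : (p <= N)%N.

Definition Up : set 'cV[C]_N := [set Y | forall j : 'I_N, (p <= j)%N -> Y j 0 = 0].
Definition stdv (l : 'I_p) : 'cV[C]_N := delta_mx (widen_ord hp l) 0.

Lemma stdv_Up l : Up (stdv l).
Proof.
move=> j hj; rewrite mxE /= andbT; case: eqP => // hjl.
by move: hj; rewrite hjl /= leqNgt ltn_ord.
Qed.

Lemma expand_Up Y : Up Y -> Y = \sum_(l < p) Y (widen_ord hp l) 0 *: stdv l.
Proof.
move=> hY; apply/matrixP => i k; rewrite summxE (ord1 k).
under eq_bigr => l _ do rewrite !mxE /= andbT.
case: (ltnP i p) => hi.
- rewrite (bigD1 (Ordinal hi)) //= big1 ?addr0.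
    have -> : i == widen_ord hp (Ordinal hi) by apply/eqP/val_inj.
    by rewrite mulr1; congr (Y _ _); apply: val_inj.
  move=> l hl; case: eqP => [hil|]; last by rewrite mulr0.
  by move: hl; rewrite -(inj_eq val_inj) /= hil eqxx.
- rewrite hY // big1 // => l _; case: eqP => [hil|]; last by rewrite mulr0.
  by move: hi; rewrite hil /= leqNgt ltn_ord.
Qed.

Definition Emx k (e : 'I_k -> 'cV[C]_N) : 'M[C]_(k, p) :=
  \matrix_(j < k, l < p) e j (widen_ord hp l) 0.

Lemma Emx_free k (e : 'I_k -> 'cV[C]_N) : is_basis Up e -> row_free (Emx e).
Proof.
case=> hU _ hind; apply: inj_row_free => v hv.
have : \sum_(j < k) v 0 j *: e j = 0.
  apply/matrixP => i c; rewrite summxE (ord1 c) !mxE.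
  case: (ltnP i p) => hi.
  - have h := congr1 (fun M : 'rV[C]_p => M 0 (Ordinal hi)) hv; rewrite !mxE in h.
    transitivity (\sum_j v 0 j * Emx e j (Ordinal hi)); last exact: h.
    apply: eq_bigr => j _; rewrite !mxE; congr (_ * e j _ _); exact: val_inj.
  - by apply: big1 => j _; rewrite !mxE hU // mulr0.
move=> /hind hc; apply/matrixP => i j; rewrite (ord1 i) mxE; exact: hc.
Qed.

Lemma basis_size k (e : 'I_k -> 'cV[C]_N) : is_basis Up e -> k = p.
Proof.
move=> hb; have hf := Emx_free hb.
have hk : (k <= p)%N.
  by move: hf; rewrite /row_free => /eqP <-; exact: rank_leq_col.
case: hb => _ hsp _.
have : forall l : 'I_p, exists c : 'I_k -> C, stdv l = \sum_(j < k) c j *: e j.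
  by move=> l; apply: hsp; exact: stdv_Up.
move=> /choice [cf hcf].
pose Cm : 'M[C]_(p, k) := \matrix_(l, j) cf l j.
have hCE : Cm *m Emx e = 1%:M.
  apply/matrixP => l l'; rewrite !mxE.
  have h := congr1 (fun M : 'cV[C]_N => M (widen_ord hp l') 0) (hcf l).
  rewrite summxE !mxE /= andbT in h.
  have winj : injective (widen_ord hp) by move=> x y hxy; apply: val_inj; exact: (congr1 val hxy).
  rewrite -(inj_eq winj) eq_sym h.
  by apply: eq_bigr => j _; rewrite !mxE.
have : (p <= k)%N.
  have := mxrankM_maxl Cm (Emx e); rewrite hCE mxrank1 => h.
  exact: (leq_trans h (rank_leq_col Cm)).
by move=> hpk; apply/eqP; rewrite eqn_leq hk hpk.
Qed.


Lemma std_basis : is_basis Up stdv.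
Proof.
split; first exact: stdv_Up.
- by move=> Y hY; exists (fun l => Y (widen_ord hp l) 0); exact: expand_Up.
- move=> c hc l; have := congr1 (fun M : 'cV[C]_N => M (widen_ord hp l) 0) hc.
  rewrite summxE mxE (bigD1 l) //= big1 ?addr0.
    by rewrite !mxE eqxx /= mulr1.
  move=> j hj; rewrite !mxE /= andbT.
  have winj : injective (widen_ord hp) by move=> x y hxy; apply: val_inj; exact: (congr1 val hxy).
  by rewrite (inj_eq winj) eq_sym (negbTE hj) mulr0.
Qed.

Variable eta : 'cV[C]_N -> 'cV[C]_N -> R.
Variable a : 'cV[C]_N.

Definition Sset := [set q | cseminorm q /\ forall Y, q Y <= eta a Y].

Lemma cseminorm0 : cseminorm (fun _ : 'cV[C]_N => (0 : R)).
Proof. by split => // [X Y|lam X]; rewrite ?addr0 ?mulr0. Qed.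

Lemma eta_hat_char (h0 : forall X : 'cV[C]_N, 0 <= eta a X)
  (hV : forall X : 'cV[C]_N, (forall j : 'I_N, (j < p)%N -> X j 0 = 0) -> eta a X = 0)
  (hU : forall X : 'cV[C]_N, (exists j : 'I_N, (j < p)%N /\ X j 0 != 0) ->
     exists q, [/\ cseminorm q, (forall Y, q Y <= eta a Y) & 0 < q X]) X :
  (eta_hat eta a X == 0) = [forall j : 'I_N, (j < p)%N ==> (X j 0 == 0)].
Proof.
have ub : ubound [set q X | q in Sset] (eta a X) by move=> _ [q [_ hq] <-].
have ne : [set q X | q in Sset] !=set0.
  by exists 0; exists (fun _ => 0) => //; split; [exact: cseminorm0 | move=> Y; exact: h0].
have hsup0 : 0 <= eta_hat eta a X.
  by apply: (ub_le_sup (ex_intro _ _ ub)); exists (fun _ => 0) => //; split;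
    [exact: cseminorm0 | move=> Y; exact: h0].
apply/idP/idP.
- move=> /eqP he; apply/forallP => j; apply/implyP => hj; apply/negPn/negP => hX.
  have [q [hq hqe qpos]] := hU X (ex_intro _ j (conj hj hX)).
  have : q X <= eta_hat eta a X.
    by apply: (ub_le_sup (ex_intro _ _ ub)); exists q.
  by rewrite he; move=> /(lt_le_trans qpos); rewrite ltxx.
- move=> /forallP hX; rewrite eq_le hsup0 andbT.
  rewrite -(hV X); first exact: ge_sup.
  by move=> j hj; apply/eqP; have := hX j; rewrite hj.
Qed.

Lemma hprod_delta (j : 'I_N) (Y : 'cV[C]_N) : hprod (delta_mx j 0) Y = conjc (Y j 0).
Proof.
rewrite /hprod (bigD1 j) //= big1 ?addr0; first by rewrite mxE !eqxx mul1r.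
by move=> i hi; rewrite mxE (negbTE hi) mul0r.
Qed.

Lemma Uset_char (h0 : forall X : 'cV[C]_N, 0 <= eta a X)
  (hV : forall X : 'cV[C]_N, (forall j : 'I_N, (j < p)%N -> X j 0 = 0) -> eta a X = 0)
  (hU : forall X : 'cV[C]_N, (exists j : 'I_N, (j < p)%N /\ X j 0 != 0) ->
     exists q, [/\ cseminorm q, (forall Y, q Y <= eta a Y) & 0 < q X]) :
  Uset eta a = Up.
Proof.
have hc := eta_hat_char h0 hV hU.
have Vc X : Vset eta a X <-> forall j : 'I_N, (j < p)%N -> X j 0 = 0.
  rewrite /Vset /=; split.
  - by move=> /eqP; rewrite hc => /forallP hX j hj; apply/eqP; have := hX j; rewrite hj.
  - move=> hX; apply/eqP; rewrite hc; apply/forallP => j; apply/implyP => hj.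
    by apply/eqP; apply: hX.
apply/funext => Y; apply/propext; split.
- move=> hY j hj.
  have hd : Vset eta a (delta_mx j 0).
    apply/Vc => i hi; rewrite mxE /= andbT; case: eqP => // hij.
    by move: hi; rewrite hij ltnNge hj.
  have := hY _ hd; rewrite hprod_delta => /eqP; rewrite conjc_eq0 => /eqP //.
- move=> hY X /Vc hX; rewrite /hprod big1 // => i _.
  case: (ltnP i p) => hi; first by rewrite hX // mul0r.
  by rewrite hY // rmorph0 mulr0.
Qed.

Lemma mdim_eq : Uset eta a = Up -> mdim eta a = p.
Proof.
move=> hU; rewrite /mdim hU.
have := @epsilon_spec nat (inhabits 0%N)
  (fun k => exists e : 'I_k -> 'cV[C]_N, is_basis Up e).
case; first by exists p, stdv; exact: std_basis.
by move=> e /basis_size.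
Qed.


Lemma gram_rel s (Hs : psd_hermitian s) (e : 'I_p -> 'cV[C]_N) (He : forall j, Up (e j)) :
  gram_det s e = \det (Emx e) * gram_det s stdv * conjc (\det (Emx e)).
Proof.
rewrite /gram_det.
have -> : \matrix_(j < p, l < p) s (e j) (e l) = Emx e *m
    (\matrix_(j < p, l < p) s (stdv j) (stdv l)) *m (map_mx conjc (Emx e))^T.
  apply/matrixP => j l; rewrite !mxE.
  rewrite {1}(expand_Up (He j)) {1}(expand_Up (He l)).
  rewrite (s_suml Hs); under eq_bigr => i _ do rewrite (sZl Hs) (s_sumr Hs).
  transitivity (\sum_i \sum_k e j (widen_ord hp i) 0 *
      (conjc (e l (widen_ord hp k) 0) * s (stdv i) (stdv k))).
    apply: eq_bigr => i _; rewrite mulr_sumr; apply: eq_bigr => k _.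
    by rewrite (sZr Hs).
  rewrite exchange_big /=; apply: eq_bigr => k _; rewrite !mxE mulr_suml.
  by apply: eq_bigr => i _; rewrite !mxE [conjc _ * _]mulrC mulrA.
by rewrite !det_mulmx det_tr det_map_mx.
Qed.

Lemma Emx_det_neq0 (e : 'I_p -> 'cV[C]_N) : is_basis Up e -> \det (Emx e) != 0.
Proof. by move=> /Emx_free; rewrite row_free_unit unitmxE unitfE. Qed.

Lemma wprec_std (hUs : Uset eta a = Up) t s :
  psd_hermitian t -> psd_hermitian s -> wprec eta a t s ->
  complex.Re (gram_det t stdv) <= complex.Re (gram_det s stdv).
Proof.
move=> Ht Hs [k [e []]]; rewrite hUs => hb hle.
have hk := basis_size hb; subst k.
have He : forall j, Up (e j) by case: hb.
move: hle; rewrite (gram_rel Ht He) (gram_rel Hs He) !Re_xzx.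
by rewrite ler_pM2l // sqr_pos // Emx_det_neq0.
Qed.

Lemma std_wprec (hUs : Uset eta a = Up) t s :
  complex.Re (gram_det t stdv) <= complex.Re (gram_det s stdv) -> wprec eta a t s.
Proof. by move=> h; exists p, stdv; split => //; rewrite hUs; exact: std_basis. Qed.

Lemma smax_spec (hUs : Uset eta a = Up) s0 : Fset eta a s0 ->
  (forall t, Fset eta a t -> complex.Re (gram_det t stdv) <= complex.Re (gram_det s0 stdv)) ->
  Fset eta a (smax eta a) /\
  complex.Re (gram_det s0 stdv) <= complex.Re (gram_det (smax eta a) stdv).
Proof.
move=> F0 hmax; rewrite /smax.
have := @epsilon_spec _ (inhabits (fun _ _ => 0))
  (fun s => Fset eta a s /\ forall t, Fset eta a t -> wprec eta a t s).
case.
  by exists s0; split => // t Ft; apply: (std_wprec hUs); exact: hmax.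
set sm := epsilon _ _ => Fm hm; split => //.
by apply: (wprec_std hUs) (hm s0 F0) => //; [case: F0 | case: Fm].
Qed.

Lemma Fset_bound t X : Fset eta a t -> complex.Re (t X X) <= (eta a X) ^+ 2.
Proof.
case=> Ht hb; have r0 := sXX_ge0 Ht X; have h := hb X.
rewrite -(sqr_sqrtr r0) ler_sqr ?nnegrE ?sqrtr_ge0 //; exact: le_trans (sqrtr_ge0 _) h.
Qed.

End WuGen.
End Work3.
Section Concrete.
Variable R : realType.
Local Notation C := (R[i]).

Lemma cabs_lin (a b : R) (u v : C) : 0 <= a -> 0 <= b ->
  cabs (a%:C * u + b%:C * v) <= a * cabs u + b * cabs v.
Proof.
move=> a0 b0; apply: le_trans (cabsD _ _) _.
by rewrite !cabsM !cabs_real !ger0_norm.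
Qed.

Lemma cabs_gt0 (x : C) : x != 0 -> 0 < cabs x.
Proof. by move=> hx; rewrite -ltcR cabsE normr_gt0. Qed.

Lemma cseminorm_lf N (p q : C) (i j : 'I_N) : cseminorm (fun Y => cabs (lf p q i j Y)).
Proof.
split => [X|X Y|lam X]; first exact: cabs_ge0.
- by rewrite lfD cabsD.
- by rewrite lfZ cabsM.
Qed.

Variable N : nat.
Hypothesis hN : (2 <= N)%N.
Let N0 : (0 < N)%N. Proof. exact: leq_trans hN. Qed.
Let h1 : (1 <= N)%N. Proof. exact: leq_trans hN. Qed.
Definition i0 : 'I_N := widen_ord hN (0 : 'I_2).
Definition i1 : 'I_N := widen_ord hN (1 : 'I_2).

Definition qm (m : nat) : R := ((m.+1)%:R)^-1.
Definition c54 : R := 5 / 4.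

Definition Dd : set 'cV[C]_N := Hs 1 0 i0 i0 1.
Definition Dm (m : nat) : set 'cV[C]_N :=
  Hs 1 0 i0 i0 1 `&` Hs 1 (qm m)%:C i0 i1 c54 `&` Hs 1 (- (qm m)%:C) i0 i1 c54.

Lemma qm_gt0 m : 0 < qm m.
Proof. by rewrite /qm invr_gt0 ltr0n. Qed.

Lemma c54_gt0 : 0 < c54.
Proof. by rewrite /c54; lra. Qed.

Lemma domain_Dd : domain Dd.
Proof. apply: star_domain; [exact: copen_Hs | exact: Hs0 | exact: star_Hs]. Qed.

Lemma Dm0 m : Dm m 0.
Proof. by split; [split|]; apply: Hs0 => //; exact: c54_gt0. Qed.

Lemma domain_Dm m : domain (Dm m).
Proof.
apply: star_domain; [|exact: Dm0|].
- by apply: copenI; [apply: copenI|]; exact: copen_Hs.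
- by apply: starI; [apply: starI|]; exact: star_Hs.
Qed.

Lemma Dm_Dd m : Dm m `<=` Dd.
Proof. by move=> z [[]]. Qed.

Lemma lf1E (q : C) (z : 'cV[C]_N) : lf 1 q i0 i1 z = z i0 0 + q * z i1 0.
Proof. by rewrite /lf mul1r. Qed.

Lemma Ecomb (a b Q : R) (x y : C) :
  a%:C * (x + Q%:C * y) + b%:C * (x + - Q%:C * y) = (a + b)%:C * x + ((a - b) * Q)%:C * y.
Proof. rewrite rmorphD rmorphM rmorphB /=; ring. Qed.

Lemma Dm_incr m : Dm m `<=` Dm m.+1.
Proof.
move=> z [[H0 Hp] Hm]; split; first split => //.
- move: Hp Hm; rewrite /Hs /= !lf1E => Hp Hm.
  set r := qm m.+1 / qm m.
  have r0 : 0 <= r by rewrite /r divr_ge0 // ltW // qm_gt0.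
  have r1 : r <= 1.
    rewrite /r ler_pdivrMr ?qm_gt0 // mul1r /qm lef_pV2 ?posrE ?ltr0n //.
    by rewrite ler_nat.
  have -> : z i0 0 + (qm m.+1)%:C * z i1 0 =
      ((1 + r) / 2)%:C * (z i0 0 + (qm m)%:C * z i1 0) +
      ((1 - r) / 2)%:C * (z i0 0 + - (qm m)%:C * z i1 0).
    have hq : qm m.+1 = r * qm m by rewrite /r mulfVK // gt_eqF // qm_gt0.
    rewrite Ecomb (_ : (1 + r) / 2 + (1 - r) / 2 = 1); last by field.
    rewrite (_ : ((1 + r) / 2 - (1 - r) / 2) * qm m = qm m.+1); last by rewrite hq; field.
    by rewrite rmorph1 mul1r.
  apply: le_lt_trans (cabs_lin _ _ _ _) _; [lra|lra|].
  rewrite /c54 in Hp Hm *; nra.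
- move: Hp Hm; rewrite /Hs /= !lf1E => Hp Hm.
  set r := qm m.+1 / qm m.
  have r0 : 0 <= r by rewrite /r divr_ge0 // ltW // qm_gt0.
  have r1 : r <= 1.
    rewrite /r ler_pdivrMr ?qm_gt0 // mul1r /qm lef_pV2 ?posrE ?ltr0n //.
    by rewrite ler_nat.
  have -> : z i0 0 + - (qm m.+1)%:C * z i1 0 =
      ((1 - r) / 2)%:C * (z i0 0 + (qm m)%:C * z i1 0) +
      ((1 + r) / 2)%:C * (z i0 0 + - (qm m)%:C * z i1 0).
    have hq : qm m.+1 = r * qm m by rewrite /r mulfVK // gt_eqF // qm_gt0.
    rewrite Ecomb (_ : (1 - r) / 2 + (1 + r) / 2 = 1); last by field.
    rewrite (_ : ((1 - r) / 2 - (1 + r) / 2) * qm m = - qm m.+1); last by rewrite hq; field.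
    by rewrite rmorph1 mul1r rmorphN.
  apply: le_lt_trans (cabs_lin _ _ _ _) _; [lra|lra|].
  rewrite /c54 in Hp Hm *; nra.
Qed.


Lemma Dd_E z : Dd z <-> cabs (z i0 0) < 1.
Proof. by rewrite /Dd /Hs /lf /= mul1r mul0r addr0. Qed.

Lemma bigcup_Dm : \bigcup_m Dm m = Dd.
Proof.
apply/seteqP; split; first by move=> z [m _ hz]; exact: Dm_Dd hz.
move=> z /Dd_E Dz.
pose m := Num.truncn (4 * cabs (z i1 0)).
have hm : 4 * cabs (z i1 0) < m.+1%:R by apply: truncnS_gt.
have hq : qm m * cabs (z i1 0) < 1 / 4.
  have e : qm m * (m.+1)%:R = 1 by rewrite /qm mulVf // pnatr_eq0.
  have := qm_gt0 m; nra.
have c1 := cabs_ge0 (z i1 0).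
exists m => //; split; first split.
- by apply/Dd_E.
- rewrite /Hs /= lf1E; apply: le_lt_trans (cabsD _ _) _.
  rewrite cabsM cabs_real ger0_norm ?ltW ?qm_gt0 // /c54; lra.
- rewrite /Hs /= lf1E; apply: le_lt_trans (cabsD _ _) _.
  rewrite cabsM cabsN cabs_real ger0_norm ?ltW ?qm_gt0 // /c54; lra.
Qed.

Lemma i01 : i0 != i1.
Proof. by rewrite -(inj_eq val_inj). Qed.

Lemma d00 : (delta_mx i0 0 : 'cV[C]_N) i0 0 = 1.
Proof. by rewrite mxE !eqxx. Qed.
Lemma d01 : (delta_mx i0 0 : 'cV[C]_N) i1 0 = 0.
Proof. by rewrite mxE eq_sym (negbTE i01). Qed.
Lemma d10 : (delta_mx i1 0 : 'cV[C]_N) i0 0 = 0.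
Proof. by rewrite mxE (negbTE i01). Qed.
Lemma d11 : (delta_mx i1 0 : 'cV[C]_N) i1 0 = 1.
Proof. by rewrite mxE !eqxx. Qed.

Lemma cabs_lt_sq (u : C) (b : R) : 0 < b ->
  complex.Re u ^+ 2 + complex.Im u ^+ 2 < b ^+ 2 -> cabs u < b.
Proof.
move=> b0; rewrite -cabs2 => h; have := cabs_ge0 u; nra.
Qed.

Unset Implicit Arguments.
Variable alpha : forall n : nat, set 'cV[C]_n -> 'cV[C]_n -> 'cV[C]_n -> R.
Set Implicit Arguments.
Hypothesis Halpha : hol_contractible alpha.

Lemma alphaD_low (X : 'cV[C]_N) : cabs (X i0 0) <= alpha N Dd 0 X.
Proof.
have := @alpha_lower _ _ Halpha N Dd 1 0 i0 i0 X N0 domain_Dd (Hs0 _ _ _ _ ltr01) (fun z h => h).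
by rewrite /lf mul1r mul0r addr0.
Qed.

Lemma alphaD_e0 : alpha N Dd 0 (delta_mx i0 0) <= 1.
Proof.
apply: (alpha_upper Halpha) => //; [exact: domain_Dd | exact: (Hs0 _ _ _ _ ltr01) |].
by move=> zeta hz; apply/Dd_E; rewrite mxE d00 mulr1.
Qed.

Lemma alphaD_zero (X : 'cV[C]_N) : X i0 0 = 0 -> alpha N Dd 0 X = 0.
Proof.
move=> hX; apply: (alpha_zero Halpha) => //; [exact: domain_Dd | exact: (Hs0 _ _ _ _ ltr01) |].
by move=> c; apply/Dd_E; rewrite mxE hX mulr0 cabs0 ltr01.
Qed.

Lemma alphaD_ge0 (X : 'cV[C]_N) : 0 <= alpha N Dd 0 X.
Proof. exact: (alpha_ge0 Halpha X N0 domain_Dd (Hs0 _ _ _ _ ltr01)). Qed.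

Lemma alphaM_ge0 m (X : 'cV[C]_N) : 0 <= alpha N (Dm m) 0 X.
Proof. exact: (alpha_ge0 Halpha X N0 (domain_Dm m) (Dm0 m)). Qed.

Lemma alphaM_low_gen m (Q : R) (X : 'cV[C]_N) :
  (forall z, Dm m z -> cabs (lf 1 Q%:C i0 i1 z) < c54) ->
  (4 / 5) * cabs (X i0 0 + Q%:C * X i1 0) <= alpha N (Dm m) 0 X.
Proof.
move=> hD.
have := @alpha_lower _ _ Halpha N (Dm m) (4 / 5)%:C (4 / 5 * Q)%:C i0 i1 X N0 (domain_Dm m) (Dm0 m).
have E z : lf (4 / 5)%:C (4 / 5 * Q)%:C i0 i1 z = (4 / 5)%:C * lf 1 Q%:C i0 i1 z.
  by rewrite /lf rmorphM /=; ring.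
rewrite (E X) cabsM cabs_real ger0_norm; last by lra.
rewrite {2}/lf mul1r; apply => z hz; rewrite E cabsM cabs_real ger0_norm; last by lra.
have := hD z hz; rewrite /c54 => h; have := cabs_ge0 (lf 1 Q%:C i0 i1 z); nra.
Qed.

Lemma alphaM_lowp m (X : 'cV[C]_N) : (4 / 5) * cabs (X i0 0 + (qm m)%:C * X i1 0) <= alpha N (Dm m) 0 X.
Proof. by apply: alphaM_low_gen => z [[_ h] _]. Qed.

Lemma alphaM_lowm m (X : 'cV[C]_N) : (4 / 5) * cabs (X i0 0 + (- qm m)%:C * X i1 0) <= alpha N (Dm m) 0 X.
Proof. by apply: alphaM_low_gen => z [_ h]; rewrite rmorphN. Qed.

Lemma alphaM_zero m (X : 'cV[C]_N) : X i0 0 = 0 -> X i1 0 = 0 -> alpha N (Dm m) 0 X = 0.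
Proof.
move=> hx0 hx1; apply: (alpha_zero Halpha) => //; [exact: domain_Dm | exact: Dm0 |].
move=> c; split; first split; rewrite /Hs /lf /= !mxE ?hx0 ?hx1 !mulr0 addr0 cabs0 //; exact: c54_gt0.
Qed.


Definition T54 : R := 4 / 5 * Num.sqrt 2.
Definition Ti : R := T54^-1.

Lemma sqrt2_sq : Num.sqrt 2 ^+ 2 = 2 :> R.
Proof. by rewrite sqr_sqrtr // ler0n. Qed.

Lemma T54_sq : T54 ^+ 2 = 32 / 25.
Proof. by rewrite /T54 exprMn sqrt2_sq; field. Qed.

Lemma T54_pos : 0 < T54.
Proof. by rewrite /T54 mulr_gt0 ?sqrtr_gt0 ?ltr0n //; lra. Qed.

Lemma T54_ge1 : 1 <= T54.
Proof. have := T54_sq; have := T54_pos; nra. Qed.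

Lemma Ti_sq : Ti ^+ 2 = 25 / 32.
Proof. by rewrite /Ti exprVn T54_sq; field. Qed.

Lemma Ti_pos : 0 < Ti.
Proof. by rewrite /Ti invr_gt0 T54_pos. Qed.

Lemma Ti_le1 : Ti <= 1.
Proof. have := Ti_sq; have := Ti_pos; nra. Qed.

Lemma L2 (z : C) (s : R) : s ^+ 2 = 1 -> cabs z < Ti ->
  cabs (z * (1 + s%:C * 'i)) < c54.
Proof.
move=> hs hz; apply: cabs_lt_sq; first exact: c54_gt0.
have hz2 : cabs z ^+ 2 < Ti ^+ 2.
  have := cabs_ge0 z; have := Ti_pos; nra.
move: hz2; clear hz; rewrite cabs2 Ti_sq /c54; case: z => a b /= h.
have -> : (a * (1 + (s * 0 - 0 * 1)) - b * (0 + (s * 1 + 0 * 0))) ^+ 2 +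
  (a * (0 + (s * 1 + 0 * 0)) + b * (1 + (s * 0 - 0 * 1))) ^+ 2 =
  (a ^+ 2 + b ^+ 2) * (1 + s ^+ 2) by ring.
rewrite hs; lra.
Qed.

Definition Xs (m : nat) (s : R) : 'cV[C]_N :=
  delta_mx i0 0 + ((s * (m.+1)%:R)%:C * 'i) *: delta_mx i1 0.

Lemma Xs0 m s : Xs m s i0 0 = 1.
Proof. by rewrite !mxE !eqxx (negbTE i01) /= mulr0 addr0. Qed.

Lemma Xs1 m s : Xs m s i1 0 = (s * (m.+1)%:R)%:C * 'i.
Proof. by rewrite !mxE !eqxx eq_sym (negbTE i01) /= mulr1 add0r. Qed.

Lemma qM1 m : qm m * (m.+1)%:R = 1.
Proof. by rewrite /qm mulVf // pnatr_eq0. Qed.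

Lemma alphaM_up m s : s ^+ 2 = 1 -> alpha N (Dm m) 0 (Xs m s) <= T54.
Proof.
move=> hs.
have e : Xs m s = T54%:C *: (Ti%:C *: Xs m s).
  by rewrite scalerA -rmorphM /Ti mulfV ?gt_eqF ?T54_pos // rmorph1 scale1r.
rewrite e (@alpha_hom _ _ Halpha N (Dm m) T54%:C _ N0 (domain_Dm m) (Dm0 m)).
rewrite cabs_real ger0_norm; last exact: ltW T54_pos.
rewrite ger_pMr ?T54_pos //.
apply: (alpha_upper Halpha) => //; [exact: domain_Dm | exact: Dm0 |].
move=> zeta hz.
move: (Xs0 m s) (Xs1 m s); move: (Xs m s) => Y Xs0' Xs1'.
have hzT : cabs (zeta * Ti%:C) < Ti.
  rewrite cabsM cabs_real ger0_norm; last exact: ltW Ti_pos.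
  by rewrite -[ltRHS]mul1r ltr_pM2r // Ti_pos.
split; first split; rewrite /Hs /=.
- rewrite /lf !mxE Xs0' mulr1 mul0r addr0 mul1r.
  exact: lt_le_trans hzT Ti_le1.
- have -> : lf 1 (qm m)%:C i0 i1 (zeta *: (Ti%:C *: Y)) =
      (zeta * Ti%:C) * (1 + ((qm m * (m.+1)%:R) * s)%:C * 'i).
    by rewrite /lf !mxE Xs0' Xs1' !rmorphM /=; ring.
  by rewrite qM1 mul1r; apply: L2.
- have -> : lf 1 (- (qm m)%:C) i0 i1 (zeta *: (Ti%:C *: Y)) =
      (zeta * Ti%:C) * (1 + ((- (qm m * (m.+1)%:R)) * s)%:C * 'i).
    by rewrite /lf !mxE Xs0' Xs1' !rmorphM !rmorphN /=; ring.
  rewrite qM1 mulN1r; apply: L2 => //; by rewrite sqrrN.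
Qed.


Definition e0 : 'cV[C]_N := delta_mx i0 0.
Definition e1 : 'cV[C]_N := delta_mx i1 0.

Definition dform (k0 k1 : R) (X Y : 'cV[C]_N) : C :=
  k0%:C * (X i0 0 * conjc (Y i0 0)) + k1%:C * (X i1 0 * conjc (Y i1 0)).

Lemma Re_real_mul (r : R) (z : C) : complex.Re (r%:C * z) = r * complex.Re z.
Proof. by case: z => a b /=; ring. Qed.

Lemma dform_XX k0 k1 X : complex.Re (dform k0 k1 X X) =
  k0 * cabs (X i0 0) ^+ 2 + k1 * cabs (X i1 0) ^+ 2.
Proof. by rewrite /dform !mulcJ_real -!rmorphM -rmorphD /= !cabs2. Qed.

Lemma cjM (x y : C) : conjc (x * y) = conjc x * conjc y.
Proof. exact: rmorphM. Qed.
Lemma cjD (x y : C) : conjc (x + y) = conjc x + conjc y.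
Proof. exact: rmorphD. Qed.

Lemma dform_psd k0 k1 : 0 <= k0 -> 0 <= k1 -> psd_hermitian (dform k0 k1).
Proof.
move=> h0 h1'; split.
- by move=> a b X Y Z; rewrite /dform !mxE; ring.
- move=> X Y; rewrite /dform cjD !cjM !conjcK !conjc_real; ring.
- by move=> X; rewrite dform_XX addr_ge0 // mulr_ge0 // sqr_ge0.
Qed.

Lemma dform_e k0 k1 : [/\ dform k0 k1 e0 e0 = k0%:C, dform k0 k1 e1 e1 = k1%:C,
  dform k0 k1 e0 e1 = 0 & dform k0 k1 e1 e0 = 0].
Proof.
rewrite /dform /e0 /e1 d00 d01 d10 d11 conjc1 conjc0.
by split; rewrite ?mulr0 ?mulr1 ?addr0 ?add0r ?mul0r ?mulr0.
Qed.

Lemma std1E (l : 'I_1) : stdv R h1 l = e0.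
Proof. by rewrite (ord1 l) /stdv /e0; congr delta_mx; apply: val_inj. Qed.

Lemma std2E0 : stdv R hN (0 : 'I_2) = e0.
Proof. by []. Qed.
Lemma std2E1 : stdv R hN (1 : 'I_2) = e1.
Proof. by []. Qed.

Lemma gram1 t : gram_det t (stdv R h1) = t e0 e0.
Proof. by rewrite /gram_det det_mx11 mxE std1E. Qed.

Lemma gram2 t : gram_det t (stdv R hN) = t e0 e0 * t e1 e1 - t e0 e1 * t e1 e0.
Proof. by rewrite /gram_det det22 !mxE. Qed.

Lemma gram2_le t : psd_hermitian t ->
  complex.Re (gram_det t (stdv R hN)) <= complex.Re (t e0 e0) * complex.Re (t e1 e1).
Proof.
move=> Ht; rewrite gram2 (sherm Ht e0 e1).
move: (sXX_real Ht e0) (sXX_real Ht e1).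
case: (t e0 e0) => a b; case: (t e1 e1) => c d; case: (t e0 e1) => u v /= -> ->.
nra.
Qed.

Lemma lt1_eq (j : 'I_N) : (j < 1)%N -> j = i0.
Proof. by move=> hj; apply: val_inj => /=; move: hj; case: (val j). Qed.

Lemma lt2_eq (j : 'I_N) : (j < 2)%N -> j = i0 \/ j = i1.
Proof.
move=> hj; case: (val j =P 0%N) => h.
  by left; apply: val_inj; rewrite /= h.
have h1j : val j = 1%N.
  by move: hj h; case: j => [[|[|k]] pj] //= _ /(_ erefl).
by right; apply: val_inj; rewrite h1j.
Qed.

Lemma UsetD : Uset (alpha N Dd) 0 = Up 1 :> set 'cV[C]_N.
Proof.
apply: Uset_char.
- exact: alphaD_ge0.
- move=> X hX; apply: alphaD_zero; apply: hX; by [].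
- move=> X [j [/lt1_eq -> hX]].
  exists (fun Y => cabs (lf 1 0 i0 i0 Y)); split.
  + exact: cseminorm_lf.
  + by move=> Y; rewrite /lf mul1r mul0r addr0; exact: alphaD_low.
  + by rewrite /lf mul1r mul0r addr0 cabs_gt0.
Qed.

Lemma mdimD : mdim (alpha N Dd) 0 = 1%N.
Proof. exact: (mdim_eq h1 UsetD). Qed.

Lemma sqrt_le (x y : R) : 0 <= y -> x <= y ^+ 2 -> Num.sqrt x <= y.
Proof. by move=> y0 h; rewrite -(ger0_norm y0) -sqrtr_sqr; apply: ler_wsqrtr. Qed.

Lemma WtD : Wt (alpha N Dd) 0 e0 = 1.
Proof.
have F0 : Fset (alpha N Dd) 0 (dform 1 0).
  split; first by apply: dform_psd; rewrite ?ler01.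
  move=> X; rewrite dform_XX mul1r mul0r addr0.
  by rewrite sqrtr_sqr ger0_norm ?cabs_ge0 // alphaD_low.
have hb t : Fset (alpha N Dd) 0 t -> complex.Re (t e0 e0) <= 1.
  move=> Ft; apply: le_trans (Fset_bound e0 Ft) _.
  have := alphaD_e0; have := alphaD_ge0 e0; nra.
have hmx : forall t, Fset (alpha N Dd) 0 t -> complex.Re (gram_det t (stdv R h1)) <=
    complex.Re (gram_det (dform 1 0) (stdv R h1)).
  move=> t Ft; rewrite !gram1; have [-> _ _ _] := dform_e 1 0; exact: hb.
have [Fm hm] := @smax_spec R N 1 h1 (alpha N Dd) 0 UsetD _ F0 hmx.
move: hm; rewrite !gram1; have [-> _ _ _] := dform_e 1 0; rewrite /= => hm.
have := hb _ Fm => hm'.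
rewrite /Wt (_ : complex.Re (smax (alpha N Dd) 0 e0 e0) = 1) ?sqrtr1 //.
by apply/eqP; rewrite eq_le hm' hm.
Qed.

Lemma WD : W (alpha N Dd) 0 e0 = 1.
Proof. by rewrite /W mdimD WtD sqrtr1 mulr1. Qed.


Lemma lf45 (Q : R) (Y : 'cV[C]_N) :
  cabs (lf (4 / 5)%:C (4 / 5 * Q)%:C i0 i1 Y) = 4 / 5 * cabs (Y i0 0 + Q%:C * Y i1 0).
Proof.
have -> : lf (4 / 5)%:C (4 / 5 * Q)%:C i0 i1 Y = (4 / 5)%:C * (Y i0 0 + Q%:C * Y i1 0).
  by rewrite /lf rmorphM /=; ring.
by rewrite cabsM cabs_real ger0_norm //; lra.
Qed.

Lemma semi_from m (Q : R)
  (hlow : forall Y : 'cV[C]_N, 4 / 5 * cabs (Y i0 0 + Q%:C * Y i1 0) <= alpha N (Dm m) 0 Y)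
  (X : 'cV[C]_N) : X i0 0 + Q%:C * X i1 0 != 0 ->
  exists q, [/\ cseminorm q, (forall Y, q Y <= alpha N (Dm m) 0 Y) & 0 < q X].
Proof.
move=> hX; exists (fun Y => cabs (lf (4 / 5)%:C (4 / 5 * Q)%:C i0 i1 Y)); split.
- exact: cseminorm_lf.
- by move=> Y; rewrite lf45; exact: hlow.
- by rewrite lf45 mulr_gt0 ?cabs_gt0 //; lra.
Qed.

Lemma UsetM m : Uset (alpha N (Dm m)) 0 = Up 2 :> set 'cV[C]_N.
Proof.
apply: Uset_char.
- exact: alphaM_ge0.
- by move=> X hX; apply: alphaM_zero; apply: hX.
- move=> X [j [/lt2_eq hj hX]].
  have [hp|hp] := eqVneq (X i0 0 + (qm m)%:C * X i1 0) 0; last first.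
    by apply: (semi_from (alphaM_lowp m)).
  have [hm|hm] := eqVneq (X i0 0 + (- qm m)%:C * X i1 0) 0; last first.
    by apply: (semi_from (alphaM_lowm m)).
  exfalso.
  have h2 : (qm m + qm m)%:C * X i1 0 = 0.
    rewrite -[RHS](subrr 0) -{1}hp -hm rmorphD rmorphN /=; ring.
  have hq2 : (qm m + qm m)%:C != 0.
    apply/eqP => h; have := congr1 (@complex.Re R) h; rewrite /=.
    by have := qm_gt0 m; lra.
  move: h2 => /eqP; rewrite mulf_eq0 (negbTE hq2) /= => /eqP h1'.
  move: hp; rewrite h1' mulr0 addr0 => h0'.
  by move: hX; case: hj => ->; rewrite ?h0' ?h1' eqxx.
Qed.

Lemma mdimM m : mdim (alpha N (Dm m)) 0 = 2%N.
Proof. exact: (mdim_eq hN (UsetM m)). Qed.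

Definition sM m := dform (16 / 25) (16 / 25 * qm m ^+ 2).

Lemma cjN (x : C) : conjc (- x) = - conjc x.
Proof. exact: rmorphN. Qed.

Lemma ReD (x y : C) : complex.Re (x + y) = complex.Re x + complex.Re y.
Proof. by case: x; case: y. Qed.

Lemma expand_X t (Ht : psd_hermitian t) (b : C) :
  t (e0 + b *: e1) (e0 + b *: e1) =
  t e0 e0 + conjc b * t e0 e1 + b * t e1 e0 + b * conjc b * t e1 e1.
Proof. rewrite (sDl Ht) (sZl Ht) !(sDr Ht) !(sZr Ht); ring. Qed.

Lemma sum_bound m t : Fset (alpha N (Dm m)) 0 t ->
  complex.Re (t e0 e0) + (m.+1)%:R ^+ 2 * complex.Re (t e1 e1) <= 32 / 25.
Proof.
move=> Ft; have Ht : psd_hermitian t by case: Ft.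
have b1 := Fset_bound (Xs m 1) Ft; have b2 := Fset_bound (Xs m (-1)) Ft.
have a1 := @alphaM_up m 1 (expr1n _ _); have a2 := @alphaM_up m (-1) (etrans (sqrrN _) (expr1n _ _)).
have g1 := alphaM_ge0 m (Xs m 1); have g2 := alphaM_ge0 m (Xs m (-1)).
have T2 := T54_sq.
set M := (m.+1)%:R : R.
pose b : C := (1 * M)%:C * 'i.
have E1 : Xs m 1 = e0 + b *: e1 by [].
have E2 : Xs m (-1) = e0 + (- b) *: e1.
  by rewrite /Xs /b mulN1r mul1r rmorphN mulNr.
have bb : b * conjc b = (M ^+ 2)%:C.
  by rewrite mulcJ_real /b /=; congr (_%:C); ring.
have hsum : t (Xs m 1) (Xs m 1) + t (Xs m (-1)) (Xs m (-1)) =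
    (t e0 e0 + t e0 e0) + ((M ^+ 2)%:C * t e1 e1 + (M ^+ 2)%:C * t e1 e1).
  rewrite E1 E2 !(expand_X Ht) cjN -bb; ring.
have := congr1 (@complex.Re R) hsum; rewrite !ReD !Re_real_mul => hR.
have : complex.Re (t (Xs m 1) (Xs m 1)) + complex.Re (t (Xs m (-1)) (Xs m (-1))) <= 2 * (32 / 25).
  have h1'' : alpha N (Dm m) 0 (Xs m 1) ^+ 2 <= 32 / 25 by rewrite -T2; nra.
  have h2'' : alpha N (Dm m) 0 (Xs m (-1)) ^+ 2 <= 32 / 25 by rewrite -T2; nra.
  lra.
rewrite hR; lra.
Qed.

Lemma WtM m : Wt (alpha N (Dm m)) 0 e0 = 4 / 5.
Proof.
set q := qm m; set M := (m.+1)%:R : R.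
have qM : q * M = 1 by exact: qM1.
have q0 := qm_gt0 m.
have F0 : Fset (alpha N (Dm m)) 0 (sM m).
  split; first by apply: dform_psd; [lra | apply: mulr_ge0; [lra | exact: sqr_ge0]].
  move=> X; apply: sqrt_le; first exact: alphaM_ge0.
  rewrite dform_XX.
  have hp := alphaM_lowp m X; have hm := alphaM_lowm m X.
  have hA := cabs_ge0 (X i0 0 + (qm m)%:C * X i1 0).
  have hB := cabs_ge0 (X i0 0 + (- qm m)%:C * X i1 0).
  have par : cabs (X i0 0 + (qm m)%:C * X i1 0) ^+ 2 + cabs (X i0 0 + (- qm m)%:C * X i1 0) ^+ 2
      = 2 * (cabs (X i0 0) ^+ 2 + qm m ^+ 2 * cabs (X i1 0) ^+ 2).
    move: (X i0 0) (X i1 0) => x y; rewrite !cabs2; case: x => a b; case: y => c d /=; ring.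
  move: hp hm hA hB par; rewrite -/q.
  set A := cabs (X i0 0 + q%:C * X i1 0); set B := cabs (X i0 0 + (- q)%:C * X i1 0).
  set al := alpha N (Dm m) 0 X; set x2 := cabs (X i0 0) ^+ 2; set y2 := cabs (X i1 0) ^+ 2.
  move=> hp hm hA hB par.
  have hA2 : 16 / 25 * A ^+ 2 <= al ^+ 2 by nra.
  have hB2 : 16 / 25 * B ^+ 2 <= al ^+ 2 by nra.
  have -> : 16 / 25 * x2 + 16 / 25 * q ^+ 2 * y2 = 8 / 25 * (A ^+ 2 + B ^+ 2) by rewrite par; ring.
  lra.
have gsM : complex.Re (gram_det (sM m) (stdv R hN)) = 16 / 25 * (16 / 25 * q ^+ 2).
  rewrite gram2 /sM; have [-> -> -> ->] := dform_e (16 / 25) (16 / 25 * qm m ^+ 2).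
  by rewrite mulr0 subr0 -rmorphM.
have key t : Fset (alpha N (Dm m)) 0 t -> complex.Re (gram_det t (stdv R hN)) <= 
    complex.Re (t e0 e0) * complex.Re (t e1 e1) /\
    complex.Re (t e0 e0) + M ^+ 2 * complex.Re (t e1 e1) <= 32 / 25 /\
    0 <= complex.Re (t e0 e0) /\ 0 <= complex.Re (t e1 e1).
  move=> Ft; have Ht : psd_hermitian t by case: Ft.
  split; first exact: gram2_le.
  split; first exact: sum_bound.
  by split; apply: sXX_ge0.
have hmx t : Fset (alpha N (Dm m)) 0 t -> complex.Re (gram_det t (stdv R hN)) <=
    complex.Re (gram_det (sM m) (stdv R hN)).
  move=> Ft; have [g [s2 [u0 v0]]] := key t Ft; rewrite gsM.
  apply: le_trans g _.
  set u := complex.Re (t e0 e0) in s2 u0 *; set v := complex.Re (t e1 e1) in s2 v0 *.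
  have w0 : 0 <= M ^+ 2 * v by rewrite mulr_ge0 // sqr_ge0.
  have euv : u * v = q ^+ 2 * (u * (M ^+ 2 * v)).
    have hqm : q ^+ 2 * M ^+ 2 = 1 by rewrite -exprMn qM expr1n.
    transitivity ((q ^+ 2 * M ^+ 2) * (u * v)); first by rewrite hqm mul1r.
    ring.
  rewrite euv.
  set w := M ^+ 2 * v in s2 w0 *.
  have huw : u * w <= (16 / 25) ^+ 2.
    have hh1 : (u + w) ^+ 2 <= (32 / 25) ^+ 2.
      have := addr_ge0 u0 w0; nra.
    have hh2 := sqr_ge0 (u - w).
    have e2 : (u + w) ^+ 2 = (u - w) ^+ 2 + 4 * (u * w) by ring.
    have e3 : (32 / 25) ^+ 2 = 4 * (16 / 25) ^+ 2 :> R by rewrite !expr2; field.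
    lra.
  have : q ^+ 2 * (u * w) <= q ^+ 2 * (16 / 25) ^+ 2.
    by rewrite ler_wpM2l // sqr_ge0.
  move=> h; apply: le_trans h _; rewrite expr2; lra.
have [Fm hm] := @smax_spec R N 2 hN (alpha N (Dm m)) 0 (UsetM m) _ F0 hmx.
have [g [s2 [u0 v0]]] := key _ Fm.
move: hm; rewrite gsM => hm.
set u := complex.Re (smax (alpha N (Dm m)) 0 e0 e0) in g s2 u0 *.
set v := complex.Re (smax (alpha N (Dm m)) 0 e1 e1) in g s2 v0 *.
have huv : 16 / 25 * (16 / 25 * q ^+ 2) <= u * v by apply: le_trans hm g.
have w0 : 0 <= M ^+ 2 * v by rewrite mulr_ge0 // sqr_ge0.
have huw : (16 / 25) ^+ 2 <= u * (M ^+ 2 * v).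
  have e : u * (M ^+ 2 * v) = M ^+ 2 * (u * v) by ring.
  rewrite e; have : M ^+ 2 * (16 / 25 * (16 / 25 * q ^+ 2)) = (16 / 25) ^+ 2.
    have hqm : q ^+ 2 * M ^+ 2 = 1 by rewrite -exprMn qM expr1n.
    transitivity ((q ^+ 2 * M ^+ 2) * (16 / 25) ^+ 2); first ring.
    by rewrite hqm mul1r.
  move=> <-; apply: ler_wpM2l => //; exact: sqr_ge0.
have hu : u = 16 / 25.
  set w := M ^+ 2 * v in w0 huw s2.
  have : (u - w) ^+ 2 <= 0 by nra.
  rewrite le_eqVlt ltNge sqr_ge0 orbF sqrf_eq0 subr_eq0 => /eqP uw.
  rewrite -uw in huw s2; nra.
rewrite /Wt -/u hu.
rewrite (_ : 16 / 25 = (4 / 5) ^+ 2 :> R); last by rewrite expr2; field.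
by rewrite sqrtr_sqr ger0_norm //; lra.
Qed.

Lemma WM m : W (alpha N (Dm m)) 0 e0 = Num.sqrt 2 * (4 / 5).
Proof. by rewrite /W mdimM WtM. Qed.

End Concrete.

Lemma cst_cvg_eq (R : realType) (a b : R) : (fun _ : nat => a) @ \oo --> b -> a = b.
Proof. move=> h; exact: (@cvg_unique _ (@Rhausdorff R) _ _ a b (cvg_cst a) h). Qed.

Unset Implicit Arguments.
Local Close Scope complex_scope.
Local Open Scope classical_set_scope.
Local Open Scope ring_scope.

Theorem proposition3p7 (R : realType)
    (alpha : forall n : nat, set 'cV[R[i]]_n -> 'cV[R[i]]_n -> 'cV[R[i]]_n -> R)
    (Halpha : hol_contractible alpha) (n : nat) (hn : (3 <= n)%N) :
  exists (D : set 'cV[R[i]]_n) (Dm : nat -> set 'cV[R[i]]_n),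
    [/\ domain D,
        forall m, domain (Dm m),
        forall m, Dm m `<=` Dm m.+1,
        forall m, Dm m `<=` D &
        \bigcup_m Dm m = D] /\
        ~ (forall a X, D a ->
             (fun m => Wt (alpha n (Dm m)) a X) @ \oo --> Wt (alpha n D) a X) /\
        ~ (forall a X, D a ->
             (fun m => W (alpha n (Dm m)) a X) @ \oo --> W (alpha n D) a X).
Proof.
have h2 : (2 <= n)%N by apply: ltnW.
exists (@Dd R n h2), (@Dm R n h2).
split.
  split.
  - exact: domain_Dd.
  - exact: domain_Dm.
  - exact: Dm_incr.
  - exact: Dm_Dd.
  - exact: bigcup_Dm.
have D0 : @Dd R n h2 0 by apply: Hs0; exact: ltr01.
split => H.
- have := H 0 (@e0 R n h2) D0.
  rewrite (@WtD R n h2 alpha Halpha).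
  rewrite (_ : (fun m => Wt (alpha n (@Dm R n h2 m)) 0 (@e0 R n h2)) = fun _ => 4 / 5).
    by move=> /cst_cvg_eq; lra.
  by apply/funext => m; exact: (@WtM R n h2 alpha Halpha m).
- have := H 0 (@e0 R n h2) D0.
  rewrite (@WD R n h2 alpha Halpha).
  rewrite (_ : (fun m => W (alpha n (@Dm R n h2 m)) 0 (@e0 R n h2)) =
     fun _ => Num.sqrt 2 * (4 / 5)).
    by move=> /cst_cvg_eq; have := @sqrt2_sq R; nra.
  by apply/funext => m; exact: (@WM R n h2 alpha Halpha m).
Qed.
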